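(* Suppose A1–A3 hold and that $\nu_k\to0$. Let $C>0$ be such that $\nu_k\le C$ for all $k$, and for each $\delta>0$ let $k_0(\delta)$ be a positive integer such that $\nu_k\le\delta$ for all $k\ge k_0(\delta)$. Let $\{x_k\}$ be generated by Algorithm 1, let $\epsilon>0$ and $\delta=\kappa_c\epsilon^2/2$. If $T$ is a positive integer with $$T\ge\max\left\{\frac{2k_0(\delta/2)C}{\delta},\ 1+k_0(\delta/2),\ \frac{2(f(x_0)-f_{low})}{\kappa_c\epsilon^2}\right\},$$ then $\min_{k=0,\dots,T-1}\|\nabla f(x_k)\|\le\epsilon$. In particular, if $M>0$ is a constant, $0\le\nu_0\le M$ and $\nu_k=M/k$ for all $k\ge1$, then $\min_{k=0,\dots,T-1}\|\nabla f(x_k)\|\le\epsilon$ holds whenever $$T\ge\max\left\{\frac{16M^2}{\kappa_c^2\epsilon^4},\ 1+\frac{4M}{\kappa_c\epsilon^2},\ \frac{2(f(x_0)-f_{low})}{\kappa_c\epsilon^2}\right\}.$$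
   Context: Let $(X,\langle\cdot,\cdot\rangle)$ be a real Hilbert space with induced norm $\|\cdot\|$, and $f:X\to\mathbb{R}$ Fréchet differentiable with gradient $\nabla f$. Algorithm 1 (general non-monotone descent algorithm): parameters $x_0\in X$, $\alpha_0>0$, $\beta,\rho\in(0,1)$. For $k=0,1,2,\dots$: choose $d_k\in X$ with $\langle\nabla f(x_k),d_k\rangle<0$; then for $l=0,1,2,\dots$ choose a number $\nu_{k,l}\ge 0$ and test $$f(x_k+\alpha_k\beta^l d_k)\le f(x_k)+\rho\alpha_k\beta^l\langle\nabla f(x_k),d_k\rangle+\nu_{k,l};$$ let $l_k$ be the first $l$ for which this holds, set $\nu_k:=\nu_{k,l_k}$, $x_{k+1}=x_k+\alpha_k\beta^{l_k}d_k$ and $\alpha_{k+1}=\alpha_k\beta^{l_k-1}$. It is assumed the algorithm generates infinite sequences (all $l_k$ finite). Assumptions: A1: $\nabla f$ is Lipschitz continuous with constant $L>0$. A2: there is $f_{low}\in\mathbb{R}$ with $f(x)\ge f_{low}$ for all $x\in X$. A3: there are constants $c_1,c_2>0$ with $\langle\nabla f(x_k),d_k\rangle\le -c_1\|\nabla f(x_k)\|^2$ and $\|d_k\|\le c_2\|\nabla f(x_k)\|$ for all $k$. Constant: $\kappa_c=\min\left\{\rho\beta\alpha_0c_1,\ \frac{2\beta\rho(1-\rho)c_1^2}{Lc_2^2}\right\}$. *)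

(* Defs.v *)
From Stdlib Require Import Reals Lra Lia ZArith.
Open Scope R_scope.
Set Implicit Arguments.

Record Hilbert := {
  H :> Type;
  hzero : H;
  hadd : H -> H -> H;
  hopp : H -> H;
  hscal : R -> H -> H;
  inner : H -> H -> R;
  hadd_assoc : forall x y z, hadd x (hadd y z) = hadd (hadd x y) z;
  hadd_comm : forall x y, hadd x y = hadd y x;
  hadd_0 : forall x, hadd x hzero = x;
  hadd_opp : forall x, hadd x (hopp x) = hzero;
  hscal_1 : forall x, hscal 1 x = x;
  hscal_assoc : forall a b x, hscal a (hscal b x) = hscal (a * b) x;
  hscal_distr_l : forall a x y, hscal a (hadd x y) = hadd (hscal a x) (hscal a y);
  hscal_distr_r : forall a b x, hscal (a + b) x = hadd (hscal a x) (hscal b x);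
  inner_sym : forall x y, inner x y = inner y x;
  inner_add_l : forall x y z, inner (hadd x y) z = inner x z + inner y z;
  inner_scal_l : forall a x y, inner (hscal a x) y = a * inner x y;
  inner_pos : forall x, 0 <= inner x x;
  inner_def : forall x, inner x x = 0 -> x = hzero;
  hcomplete : forall u : nat -> H,
    (forall eps, eps > 0 -> exists N, forall m n, (m >= N)%nat -> (n >= N)%nat ->
        sqrt (inner (hadd (u m) (hopp (u n))) (hadd (u m) (hopp (u n)))) < eps) ->
    exists l, forall eps, eps > 0 -> exists N, forall n, (n >= N)%nat ->
        sqrt (inner (hadd (u n) (hopp l)) (hadd (u n) (hopp l))) < eps
}.

Definition hnorm {X : Hilbert} (x : X) : R := sqrt (inner X x x).
Definition hsub {X : Hilbert} (x y : X) : X := hadd X x (hopp X y).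

Definition is_gradient (X : Hilbert) (f : X -> R) (g : X -> X) : Prop :=
  forall x eps, eps > 0 -> exists delta, delta > 0 /\
    forall h : X, hnorm h < delta ->
      Rabs (f (hadd X x h) - f x - inner X (g x) h) <= eps * hnorm h.

(* Algorithm 1 (general non-monotone descent algorithm). nu k l = nu_{k,l},
   lk k = l_k; the accepted value is nu_k = nu k (lk k). *)
Definition algorithm1 (X : Hilbert) (f : X -> R) (g : X -> X)
  (beta rho : R) (x : nat -> X) (d : nat -> X) (alpha : nat -> R)
  (nu : nat -> nat -> R) (lk : nat -> nat) : Prop :=
  alpha 0%nat > 0 /\ 0 < beta < 1 /\ 0 < rho < 1 /\
  forall k,
    inner X (g (x k)) (d k) < 0 /\
    (forall l, 0 <= nu k l) /\
    (f (hadd X (x k) (hscal X (alpha k * beta ^ lk k) (d k)))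
       <= f (x k) + rho * (alpha k * beta ^ lk k) * inner X (g (x k)) (d k) + nu k (lk k)) /\
    (forall l, (l < lk k)%nat ->
       ~ (f (hadd X (x k) (hscal X (alpha k * beta ^ l) (d k)))
          <= f (x k) + rho * (alpha k * beta ^ l) * inner X (g (x k)) (d k) + nu k l)) /\
    x (S k) = hadd X (x k) (hscal X (alpha k * beta ^ lk k) (d k)) /\
    alpha (S k) = alpha k * powerRZ beta (Z.of_nat (lk k) - 1).

Definition kappa_c (alpha0 beta rho c1 c2 L : R) : R :=
  Rmin (rho * beta * alpha0 * c1) (2 * beta * rho * (1 - rho) * c1 ^ 2 / (L * c2 ^ 2)).

(* min_{k = 0..T-1} u k  (meaningful for T >= 1). *)
Fixpoint minseq (u : nat -> R) (T : nat) : R :=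
  match T with
  | O => u O
  | S O => u O
  | S ((S _) as n) => Rmin (minseq u n) (u n)
  end.

(* Main.v *)
Require Import Defs.
From Stdlib Require Import Reals Lra Lia ZArith.
From Coquelicot Require Import Coquelicot.
Open Scope R_scope.

Lemma inner0l (X : Hilbert) v : inner X (hzero X) v = 0.
Proof.
  pose proof (inner_add_l X (hzero X) (hzero X) v) as H.
  rewrite hadd_0 in H. lra.
Qed.

Lemma inner_opp_l (X : Hilbert) a v : inner X (hopp X a) v = - inner X a v.
Proof.
  pose proof (inner_add_l X a (hopp X a) v) as H.
  rewrite hadd_opp, inner0l in H. lra.
Qed.

Lemma inner_sub_l (X : Hilbert) a b v : inner X (hsub a b) v = inner X a v - inner X b v.
Proof. unfold hsub. rewrite inner_add_l, inner_opp_l. ring. Qed.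

Lemma inner_add_r (X : Hilbert) v a b : inner X v (hadd X a b) = inner X v a + inner X v b.
Proof. rewrite !(inner_sym X v), inner_add_l. ring. Qed.

Lemma inner_scal_r (X : Hilbert) t v a : inner X v (hscal X t a) = t * inner X v a.
Proof. rewrite !(inner_sym X v), inner_scal_l. ring. Qed.

Lemma hscal0 (X : Hilbert) d : hscal X 0 d = hzero X.
Proof.
  set (w := hscal X 0 d).
  assert (Hw : w = hadd X w w).
  { unfold w. rewrite <- hscal_distr_r. f_equal. ring. }
  transitivity (hadd X (hadd X w w) (hopp X w)).
  - rewrite <- hadd_assoc, hadd_opp, hadd_0; reflexivity.
  - rewrite <- Hw. apply hadd_opp.
Qed.

Lemma hnorm_ge0 (X : Hilbert) (x : X) : 0 <= hnorm x.
Proof. apply sqrt_pos. Qed.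

Lemma hnorm_sq (X : Hilbert) (x : X) : hnorm x * hnorm x = inner X x x.
Proof. apply sqrt_sqrt, inner_pos. Qed.

Lemma hnorm_scal (X : Hilbert) t (d : X) : hnorm (hscal X t d) = Rabs t * hnorm d.
Proof.
  unfold hnorm. rewrite inner_scal_l, inner_scal_r, <- Rmult_assoc.
  rewrite sqrt_mult_alt by (apply Rle_0_sqr).
  rewrite <- sqrt_Rsqr_abs. reflexivity.
Qed.

Lemma CS (X : Hilbert) (u v : X) : inner X u v <= hnorm u * hnorm v.
Proof.
  set (a := inner X u u). set (b := inner X u v). set (c := inner X v v).
  assert (Hq : forall t, 0 <= a + 2 * t * b + t * t * c).
  { intro t. pose proof (inner_pos X (hadd X u (hscal X t v))) as P.
    rewrite inner_add_l, !inner_add_r, !inner_scal_l, !inner_scal_r in P.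
    rewrite (inner_sym X v u) in P. unfold a, b, c. eapply Rle_trans; [exact P|]. right; ring. }
  destruct (Rle_or_lt b 0) as [Hb|Hb].
  { pose proof (hnorm_ge0 X u); pose proof (hnorm_ge0 X v); nra. }
  assert (Hc : 0 <= c) by apply inner_pos.
  assert (Hbb : b * b <= a * c).
  { destruct (Req_dec c 0) as [H0|H0].
    - specialize (Hq (- (a + 1) / (2 * b))). rewrite H0 in Hq.
      exfalso. rewrite Rmult_0_r, Rplus_0_r in Hq.
      assert (a + 2 * (- (a + 1) / (2 * b)) * b = -1) by (field; lra). lra.
    - specialize (Hq (- b / c)).
      assert (a + 2 * (- b / c) * b + - b / c * (- b / c) * c = a - b * b / c) by (field; lra).
      rewrite H in Hq.
      assert (0 <= (a - b * b / c) * c) by (apply Rmult_le_pos; lra).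
      assert ((a - b*b/c)*c = a * c - b * b) by (field; lra). lra. }
  unfold hnorm. fold a c. rewrite <- sqrt_mult_alt by apply inner_pos.
  rewrite <- (sqrt_square b) by lra. apply sqrt_le_1_alt. lra.
Qed.

Lemma path_eq (X : Hilbert) (x d : X) t h :
  hadd X x (hscal X (t + h) d) = hadd X (hadd X x (hscal X t d)) (hscal X h d).
Proof. rewrite hscal_distr_r, hadd_assoc. reflexivity. Qed.

Lemma deriv_F (X : Hilbert) f g (x d : X) t : is_gradient X f g ->
  derivable_pt_lim (fun t => f (hadd X x (hscal X t d))) t
     (inner X (g (hadd X x (hscal X t d))) d).
Proof.
  intros Hg eps Heps.
  set (y := hadd X x (hscal X t d)).
  set (K := hnorm d + 1).
  assert (HK : 0 < K) by (unfold K; pose proof (hnorm_ge0 X d); lra).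
  destruct (Hg y (eps / 2 / K)) as [del [Hdel Hh]].
  { apply Rdiv_lt_0_compat; lra. }
  assert (Hpos : 0 < del / K) by (apply Rdiv_lt_0_compat; lra).
  exists (mkposreal _ Hpos). simpl. intros h Hh0 Hhlt.
  rewrite path_eq. fold y.
  specialize (Hh (hscal X h d)).
  rewrite hnorm_scal, inner_scal_r in Hh.
  assert (Hnd : 0 <= hnorm d) by apply hnorm_ge0.
  assert (Hah : 0 < Rabs h) by (apply Rabs_pos_lt; auto).
  assert (Hlt : Rabs h * hnorm d < del).
  { assert (Rabs h * K < del).
    { apply (Rmult_lt_compat_r K) in Hhlt; auto.
      unfold Rdiv in Hhlt. rewrite Rmult_assoc, Rinv_l in Hhlt; lra. }
    unfold K in H. nra. }
  specialize (Hh Hlt).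
  replace ((f (hadd X y (hscal X h d)) - f y) / h - inner X (g y) d)
    with ((f (hadd X y (hscal X h d)) - f y - h * inner X (g y) d) / h)
    by (field; auto).
  unfold Rdiv at 1. rewrite Rabs_mult, Rabs_inv.
  apply (Rmult_le_compat_r (/ Rabs h)) in Hh; [| left; apply Rinv_0_lt_compat; auto].
  eapply Rle_lt_trans; [exact Hh|].
  replace (eps / 2 / K * (Rabs h * hnorm d) * / Rabs h) with (eps / 2 * (hnorm d / K))
    by (field; lra).
  assert (hnorm d / K < 1).
  { apply (Rmult_lt_reg_r K); auto. unfold Rdiv. rewrite Rmult_assoc, Rinv_l; unfold K; lra. }
  assert (0 <= hnorm d / K) by (unfold Rdiv; apply Rmult_le_pos; [lra| left; apply Rinv_0_lt_compat; lra]).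
  nra.
Qed.

Lemma descent (X : Hilbert) f g L (x d : X) s :
  is_gradient X f g -> L > 0 ->
  (forall y z : X, hnorm (hsub (g y) (g z)) <= L * hnorm (hsub y z)) ->
  0 < s ->
  f (hadd X x (hscal X s d)) <=
    f x + s * inner X (g x) d + L * s ^ 2 * hnorm d ^ 2 / 2.
Proof.
  intros Hg HL Hlip Hs.
  set (N := hnorm d ^ 2).
  set (c := inner X (g x) d).
  set (phi := fun t => f (hadd X x (hscal X t d)) - (t * c + L * (t * t) * N / 2)).
  set (dphi := fun t => inner X (g (hadd X x (hscal X t d))) d - (c + L * t * N)).
  assert (Hd : forall t, derivable_pt_lim phi t (dphi t)).
  { intro t. unfold phi, dphi.
    apply derivable_pt_lim_minus.
    - apply deriv_F; auto.
    - apply is_derive_Reals. auto_derive; [trivial|]. field. }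
  destruct (MVT_cor2 phi dphi 0 s Hs (fun t _ => Hd t)) as [c0 [Heq Hc0]].
  assert (Hneg : dphi c0 <= 0).
  { unfold dphi.
    set (y := hadd X x (hscal X c0 d)).
    assert (E : inner X (g y) d - c = inner X (hsub (g y) (g x)) d)
      by (unfold c; rewrite inner_sub_l; reflexivity).
    assert (Hy : hsub y x = hscal X c0 d).
    { unfold y, hsub. rewrite (hadd_comm X x), <- hadd_assoc, hadd_opp, hadd_0. reflexivity. }
    pose proof (CS X (hsub (g y) (g x)) d) as H1.
    pose proof (Hlip y x) as H2. rewrite Hy, hnorm_scal, Rabs_right in H2 by lra.
    pose proof (hnorm_ge0 X d).
    assert (hnorm (hsub (g y) (g x)) * hnorm d <= L * (c0 * hnorm d) * hnorm d)
      by (apply Rmult_le_compat_r; auto).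
    unfold N. simpl. nra. }
  assert (Hphi0 : phi 0 = f x).
  { unfold phi. rewrite hscal0, hadd_0. lra. }
  assert (phi s <= f x) by nra.
  unfold phi in H. unfold N in *. simpl in *. nra.
Qed.

Fixpoint ssum (u : nat -> R) (n : nat) : R :=
  match n with O => 0 | S n => ssum u n + u n end.

Lemma inner0r (X : Hilbert) v : inner X v (hzero X) = 0.
Proof. rewrite inner_sym. apply inner0l. Qed.

Lemma analysis (X : Hilbert) (f : X -> R) (g : X -> X)
  (beta rho : R) (x d : nat -> X) (alpha : nat -> R)
  (nu : nat -> nat -> R) (lk : nat -> nat)
  (L flow c1 c2 : R) :
  is_gradient X f g ->
  algorithm1 X f g beta rho x d alpha nu lk ->
  L > 0 -> (forall y z : X, hnorm (hsub (g y) (g z)) <= L * hnorm (hsub y z)) ->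
  (forall y : X, f y >= flow) ->
  c1 > 0 -> c2 > 0 ->
  (forall k, inner X (g (x k)) (d k) <= - c1 * (hnorm (g (x k))) ^ 2 /\
             hnorm (d k) <= c2 * hnorm (g (x k))) ->
  kappa_c (alpha 0%nat) beta rho c1 c2 L > 0 /\
  forall T, kappa_c (alpha 0%nat) beta rho c1 c2 L * ssum (fun k => hnorm (g (x k)) ^ 2) T
     <= f (x 0%nat) - flow + ssum (fun k => nu k (lk k)) T.
Proof.
  intros Hg Halg HL Hlip Hlow Hc1 Hc2 HA3.
  destruct Halg as [Ha0 [[Hb0 Hb1] [[Hr0 Hr1] Hk]]].
  set (B := 2 * (1 - rho) * c1 / (L * c2 ^ 2)).
  assert (HB : 0 < B).
  { unfold B. apply Rdiv_lt_0_compat. nra. apply Rmult_lt_0_compat; auto. apply pow_lt; auto. }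
  set (m := Rmin (alpha 0%nat) B).
  assert (Hm : 0 < m) by (unfold m; apply Rmin_glb_lt; auto).
  set (kc := kappa_c (alpha 0%nat) beta rho c1 c2 L).
  assert (Hkc : kc <= rho * beta * c1 * m /\ 0 < kc).
  { unfold kc, kappa_c, m, B. unfold Rmin.
    assert (E : 2 * beta * rho * (1 - rho) * c1 ^ 2 / (L * c2 ^ 2) =
              rho * beta * c1 * (2 * (1 - rho) * c1 / (L * c2 ^ 2))).
    { field. split; lra || (apply pow_nonzero; lra). }
    rewrite E.
    assert (0 < rho * beta * c1) by (apply Rmult_lt_0_compat; nra).
    assert (0 < rho * beta * c1 * (2 * (1 - rho) * c1 / (L * c2 ^ 2))) by (apply Rmult_lt_0_compat; auto).
    destruct (Rle_dec (rho * beta * alpha 0%nat * c1)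
                (rho * beta * c1 * (2 * (1 - rho) * c1 / (L * c2 ^ 2)))) as [h1|h1];
    destruct (Rle_dec (alpha 0%nat) (2 * (1 - rho) * c1 / (L * c2 ^ 2))) as [h2|h2];
    split; try nra. }
  assert (Hapos : forall k, 0 < alpha k).
  { induction k; auto. destruct (Hk k) as [_ [_ [_ [_ [_ E]]]]]. rewrite E.
    apply Rmult_lt_0_compat; auto. apply powerRZ_lt. lra. }
  assert (HG : forall k, 0 < hnorm (g (x k))).
  { intro k. destruct (HA3 k) as [_ H2]. destruct (Hk k) as [H1 _].
    destruct (Rle_lt_or_eq_dec 0 (hnorm (g (x k)))) as [h|h]; auto. apply hnorm_ge0.
    exfalso. rewrite <- h in H2.
    assert (hnorm (d k) = 0) by (pose proof (hnorm_ge0 X (d k)); nra).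
    assert (inner X (d k) (d k) = 0) by (rewrite <- hnorm_sq, H; ring).
    apply inner_def in H0. rewrite H0, inner0r in H1. lra. }
  assert (Hfail : forall k l, (S l = lk k)%nat -> alpha k * beta ^ l > B).
  { intros k l Hl.
    destruct (Hk k) as [Hgd [Hnu [_ [Hf _]]]].
    destruct (HA3 k) as [A1 A2].
    set (s := alpha k * beta ^ l).
    assert (Hs : 0 < s) by (unfold s; apply Rmult_lt_0_compat; auto; apply pow_lt; lra).
    specialize (Hf l ltac:(lia)). fold s in Hf.
    pose proof (descent X f g L (x k) (d k) s Hg HL Hlip Hs) as D.
    specialize (Hnu l).
    set (G := hnorm (g (x k))) in *. set (gd := inner X (g (x k)) (d k)) in *.
    set (nd := hnorm (d k)) in *.
    assert (Hnd : 0 <= nd) by apply hnorm_ge0.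
    pose proof (HG k) as HGk. fold G in HGk.
    assert (S1 : rho * s * gd < s * gd + L * s ^ 2 * nd ^ 2 / 2) by lra.
    assert (S2 : (1 - rho) * (- gd) < L * s * nd ^ 2 / 2).
    { apply (Rmult_lt_reg_l s); auto. nra. }
    assert (S3 : nd ^ 2 <= c2 ^ 2 * G ^ 2) by nra.
    assert (S4 : (1 - rho) * c1 * G ^ 2 < L * s * c2 ^ 2 * G ^ 2 / 2).
    { assert (L * s * nd ^ 2 <= L * s * (c2 ^ 2 * G ^ 2)).
      { apply Rmult_le_compat_l; auto. nra. }
      nra. }
    assert (S5 : 2 * (1 - rho) * c1 < s * (L * c2 ^ 2)).
    { assert (0 < G ^ 2) by (apply pow_lt; auto). nra. }
    unfold B. apply Rlt_gt. apply (Rmult_lt_reg_r (L * c2 ^ 2)).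
    { apply Rmult_lt_0_compat; auto. apply pow_lt; auto. }
    unfold Rdiv. rewrite Rmult_assoc, Rinv_l. lra.
    apply Rgt_not_eq. apply Rmult_lt_0_compat; auto. apply pow_lt; auto. }
  assert (Ham : forall k, m <= alpha k).
  { induction k. unfold m; apply Rmin_l.
    destruct (Hk k) as [_ [_ [_ [_ [_ E]]]]]. rewrite E.
    destruct (lk k) as [|l] eqn:El.
    - simpl. replace (alpha k * / (beta * 1)) with (alpha k / beta) by (field; lra).
      assert (alpha k <= alpha k / beta).
      { apply (Rmult_le_reg_r beta); try lra. unfold Rdiv. rewrite Rmult_assoc, Rinv_l by lra.
        pose proof (Hapos k). nra. }
      lra.
    - replace (Z.of_nat (S l) - 1)%Z with (Z.of_nat l) by lia.
      rewrite <- pow_powerRZ.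
      pose proof (Hfail k l (eq_sym El)). unfold m. pose proof (Rmin_r (alpha 0%nat) B). lra. }
  assert (Ht : forall k, beta * m <= alpha k * beta ^ lk k).
  { intro k. destruct (lk k) as [|l] eqn:El.
    - simpl. pose proof (Ham k). nra.
    - pose proof (Hfail k l (eq_sym El)). pose proof (Rmin_r (alpha 0%nat) B).
      simpl. fold m in H0. nra. }
  assert (Hdec : forall k, f (x (S k)) <= f (x k) - kc * hnorm (g (x k)) ^ 2 + nu k (lk k)).
  { intro k. destruct (Hk k) as [Hgd [_ [Hacc [_ [Ex _]]]]].
    rewrite Ex. destruct (HA3 k) as [A1 _].
    pose proof (Ht k). set (t := alpha k * beta ^ lk k) in *.
    set (G2 := hnorm (g (x k)) ^ 2) in *.
    assert (0 <= G2) by (unfold G2; apply pow_le; apply hnorm_ge0).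
    assert (rho * t * inner X (g (x k)) (d k) <= - (rho * t * c1 * G2)).
    { assert (0 < rho * t) by (apply Rmult_lt_0_compat; nra). nra. }
    assert (kc * G2 <= rho * t * c1 * G2).
    { apply Rmult_le_compat_r; auto. destruct Hkc. assert (0 < rho * c1) by nra.
      assert (rho * c1 * (beta * m) <= rho * c1 * t) by (apply Rmult_le_compat_l; lra). nra. }
    lra. }
  split. destruct Hkc; lra.
  assert (Htel : forall T, f (x T) + kc * ssum (fun k => hnorm (g (x k)) ^ 2) T
     <= f (x 0%nat) + ssum (fun k => nu k (lk k)) T).
  { intro T. induction T.
    - simpl. lra.
    - cbn [ssum]. pose proof (Hdec T). rewrite Rmult_plus_distr_l. lra. }
  intro T. specialize (Htel T). specialize (Hlow (x T)). fold kc. lra.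
Qed.

Lemma minseq_le u T k : (k < T)%nat -> minseq u T <= u k.
Proof.
  revert k. induction T as [|T IH]; intros k Hk. lia.
  destruct T as [|n].
  - replace k with 0%nat by lia. simpl. lra.
  - change (minseq u (S (S n))) with (Rmin (minseq u (S n)) (u (S n))).
    destruct (Nat.eq_dec k (S n)) as [->|Hne].
    + apply Rmin_r.
    + eapply Rle_trans; [apply Rmin_l|]. apply IH. lia.
Qed.

Lemma ssum_le u v T : (forall k, (k < T)%nat -> u k <= v k) -> ssum u T <= ssum v T.
Proof.
  induction T; intros H; simpl. lra.
  assert (ssum u T <= ssum v T) by (apply IHT; intros; apply H; lia).
  pose proof (H T ltac:(lia)). lra.
Qed.

Lemma ssum_lt u v T : (0 < T)%nat -> (forall k, (k < T)%nat -> u k < v k) -> ssum u T < ssum v T.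
Proof.
  destruct T as [|T]; intros H0 H. lia. simpl.
  assert (ssum u T <= ssum v T) by (apply ssum_le; intros; apply Rlt_le, H; lia).
  pose proof (H T ltac:(lia)). lra.
Qed.

Lemma ssum_const c T : ssum (fun _ => c) T = INR T * c.
Proof. induction T; simpl ssum. simpl; ring. rewrite IHT, S_INR. ring. Qed.

Lemma div_ge a b c : c > 0 -> a >= b / c -> b <= a * c.
Proof.
  intros Hc H. apply Rge_le in H. apply (Rmult_le_compat_r c) in H; [|lra].
  unfold Rdiv in H. rewrite Rmult_assoc, Rinv_l in H; lra.
Qed.

Lemma final_lemma (G nuk : nat -> R) kc F eps T :
  kc > 0 -> eps > 0 -> (0 < T)%nat ->
  (forall k, 0 <= G k) ->
  kc * ssum (fun k => G k ^ 2) T <= F + ssum nuk T ->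
  F <= INR T * (kc * eps ^ 2 / 2) ->
  ssum nuk T <= INR T * (kc * eps ^ 2 / 2) ->
  minseq G T <= eps.
Proof.
  intros Hkc He HT HG H1 H2 H3.
  destruct (Rle_or_lt (minseq G T) eps) as [h|h]; auto. exfalso.
  assert (Hlt : ssum (fun _ => eps ^ 2) T < ssum (fun k => G k ^ 2) T).
  { apply ssum_lt; auto. intros k Hk. pose proof (minseq_le G T k Hk).
    pose proof (HG k). simpl. nra. }
  rewrite ssum_const in Hlt.
  apply (Rmult_lt_compat_l kc) in Hlt; auto. nra.
Qed.

Lemma sum_part1 (nuk : nat -> R) C k0 dl T :
  (forall k, nuk k <= C) -> (forall k, (k >= k0)%nat -> nuk k <= dl) -> 0 < dl ->
  ssum nuk T <= INR (Nat.min T k0) * C + INR T * dl.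
Proof.
  intros HC Hd Hdl. induction T. simpl. lra.
  simpl ssum. rewrite S_INR.
  destruct (Nat.lt_ge_cases T k0) as [h|h].
  - replace (Nat.min (S T) k0) with (S (Nat.min T k0)) by lia. rewrite S_INR.
    pose proof (HC T). lra.
  - replace (Nat.min (S T) k0) with (Nat.min T k0) by lia.
    pose proof (Hd T h). lra.
Qed.

Lemma sum_part2 (nuk : nat -> R) M T :
  M > 0 -> nuk 0%nat <= M -> (forall k, (k >= 1)%nat -> nuk k = M / INR k) ->
  (1 <= T)%nat -> ssum nuk T <= 2 * M * sqrt (INR T).
Proof.
  intros HM H0 Hk HT. induction T as [|T IH]. lia.
  destruct T as [|T].
  - cbn [ssum INR]. rewrite sqrt_1. lra.
  - destruct T as [|T].
    + simpl ssum. rewrite (Hk 1%nat) by lia. simpl INR.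
      assert (1 <= sqrt (1 + 1)).
      { apply Rle_trans with (sqrt 1); [rewrite sqrt_1; lra| apply sqrt_le_1_alt; lra]. }
      replace (M / 1) with M by field. nra.
    + specialize (IH ltac:(lia)).
      change (ssum nuk (S (S (S T)))) with (ssum nuk (S (S T)) + nuk (S (S T))).
      rewrite (Hk (S (S T))) by lia.
      set (n := INR (S (S T))) in *.
      assert (Hn : 2 <= n) by (unfold n; rewrite !S_INR; pose proof (pos_INR T); lra).
      replace (INR (S (S (S T)))) with (n + 1) by (unfold n; rewrite (S_INR (S (S T))); ring).
      set (a := sqrt n). set (b := sqrt (n + 1)).
      assert (Ha : a * a = n) by (apply sqrt_sqrt; lra).
      assert (Hb : b * b = n + 1) by (apply sqrt_sqrt; lra).
      assert (Ha0 : 0 <= a) by apply sqrt_pos.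
      assert (Hb0 : 0 <= b) by apply sqrt_pos.
      assert (Hab : a <= b) by (apply sqrt_le_1_alt; lra).
      assert (Han : a <= n) by nra.
      assert (Hbn : b <= n) by nra.
      assert (Key : 1 <= 2 * n * (b - a)).
      { assert ((b - a) * (b + a) = 1) by nra. nra. }
      assert (M / n <= 2 * M * (b - a)).
      { apply (Rmult_le_reg_r n); [lra|]. unfold Rdiv.
        rewrite Rmult_assoc, Rinv_l by lra. nra. }
      fold a in IH. lra.
Qed.

Theorem corollary2 (X : Hilbert) (f : X -> R) (g : X -> X)
  (beta rho : R) (x d : nat -> X) (alpha : nat -> R)
  (nu : nat -> nat -> R) (lk : nat -> nat)
  (L flow c1 c2 : R) :
  is_gradient X f g ->
  algorithm1 X f g beta rho x d alpha nu lk ->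
  (* A1 *)
  L > 0 -> (forall y z : X, hnorm (hsub (g y) (g z)) <= L * hnorm (hsub y z)) ->
  (* A2 *)
  (forall y : X, f y >= flow) ->
  (* A3 *)
  c1 > 0 -> c2 > 0 ->
  (forall k, inner X (g (x k)) (d k) <= - c1 * (hnorm (g (x k))) ^ 2 /\
             hnorm (d k) <= c2 * hnorm (g (x k))) ->
  let kc := kappa_c (alpha 0%nat) beta rho c1 c2 L in
  let nuk := fun k => nu k (lk k) in
  (forall (C : R) (k0 : R -> nat) (eps : R) (T : nat),
     Un_cv nuk 0 ->
     C > 0 -> (forall k, nuk k <= C) ->
     (forall dl, dl > 0 -> (0 < k0 dl)%nat /\ forall k, (k >= k0 dl)%nat -> nuk k <= dl) ->
     eps > 0 ->
     let delta := kc * eps ^ 2 / 2 in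
     (0 < T)%nat ->
     INR T >= Rmax (Rmax (2 * INR (k0 (delta / 2)) * C / delta) (1 + INR (k0 (delta / 2))))
                   (2 * (f (x 0%nat) - flow) / (kc * eps ^ 2)) ->
     minseq (fun k => hnorm (g (x k))) T <= eps)
  /\
  (forall (M eps : R) (T : nat),
     M > 0 -> 0 <= nuk 0%nat <= M -> (forall k, (k >= 1)%nat -> nuk k = M / INR k) ->
     eps > 0 ->
     (0 < T)%nat ->
     INR T >= Rmax (Rmax (16 * M ^ 2 / (kc ^ 2 * eps ^ 4)) (1 + 4 * M / (kc * eps ^ 2)))
                   (2 * (f (x 0%nat) - flow) / (kc * eps ^ 2)) ->
     minseq (fun k => hnorm (g (x k))) T <= eps).
Proof.
  intros Hg Halg HL Hlip Hlow Hc1 Hc2 HA3 kc nuk.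
  destruct (analysis X f g beta rho x d alpha nu lk L flow c1 c2 Hg Halg HL Hlip Hlow Hc1 Hc2 HA3)
    as [Hkc Hmain].
  fold kc in Hkc, Hmain. fold nuk in Hmain.
  split.
  - intros C k0 eps T _ HC HCb Hk0 Heps delta HT HTb.
    assert (Hdel : delta > 0) by (unfold delta; apply Rmult_gt_0_compat; [apply Rmult_gt_0_compat; [lra| apply pow_lt; lra]|lra]).
    assert (H1 : INR T >= 2 * INR (k0 (delta / 2)) * C / delta).
    { apply Rle_ge. eapply Rle_trans; [|apply Rge_le; exact HTb].
      eapply Rle_trans; [|apply Rmax_l]. apply Rmax_l. }
    assert (H3 : INR T >= 2 * (f (x 0%nat) - flow) / (kc * eps ^ 2)).
    { apply Rle_ge. eapply Rle_trans; [|apply Rge_le; exact HTb]. apply Rmax_r. }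
    apply div_ge in H1; auto. apply div_ge in H3; [|apply Rmult_gt_0_compat; [lra| apply pow_lt; lra]].
    destruct (Hk0 (delta / 2)) as [_ Hk0']. lra.
    pose proof (sum_part1 nuk C (k0 (delta / 2)) (delta / 2) T HCb Hk0' ltac:(lra)) as S1.
    pose proof (le_INR _ _ (Nat.le_min_r T (k0 (delta / 2)))) as S2.
    apply (final_lemma (fun k => hnorm (g (x k))) nuk kc (f (x 0%nat) - flow)); auto.
    + intro; apply hnorm_ge0.
    + nra.
    + unfold delta in *. nra.
  - intros M eps T HM [H00 H0] Hk Heps HT HTb.
    assert (HK : kc * eps ^ 2 > 0) by (apply Rmult_gt_0_compat; [lra| apply pow_lt; lra]).
    assert (H1 : INR T >= 16 * M ^ 2 / (kc ^ 2 * eps ^ 4)).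
    { apply Rle_ge. eapply Rle_trans; [|apply Rge_le; exact HTb].
      eapply Rle_trans; [|apply Rmax_l]. apply Rmax_l. }
    assert (H3 : INR T >= 2 * (f (x 0%nat) - flow) / (kc * eps ^ 2)).
    { apply Rle_ge. eapply Rle_trans; [|apply Rge_le; exact HTb]. apply Rmax_r. }
    replace (kc ^ 2 * eps ^ 4) with ((kc * eps ^ 2) ^ 2) in H1 by ring.
    apply div_ge in H1; [|apply pow_lt; lra]. apply div_ge in H3; auto.
    pose proof (sum_part2 nuk M T HM H0 Hk ltac:(lia)) as S1.
    set (s := sqrt (INR T)) in *.
    assert (Hs : s * s = INR T) by (apply sqrt_sqrt, pos_INR).
    assert (Hs0 : 0 <= s) by apply sqrt_pos.
    set (K := kc * eps ^ 2) in *.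
    assert (HKs : 4 * M <= K * s).
    { rewrite <- Hs in H1. destruct (Rle_or_lt (4 * M) (K * s)); auto.
      assert (0 <= K * s) by (apply Rmult_le_pos; lra).
      assert ((K * s) * (K * s) < (4 * M) * (4 * M)) by (apply Rmult_le_0_lt_compat; lra).
      exfalso. simpl in H1. nra. }
    apply (final_lemma (fun k => hnorm (g (x k))) nuk kc (f (x 0%nat) - flow)); auto.
    + intro; apply hnorm_ge0.
    + fold K. lra.
    + fold K. rewrite <- Hs. nra.
Qed.
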